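(* With notation as in the context, for all $1\le i,j\le m+n$ and $1\le r\le\ell$, $$\mu(t^{(r)}_{ij;\mathfrak{b}})=\sum_{1\le s_1<\cdots<s_r\le\ell}\ \sum_{1\le i_1,\dots,i_{r-1}\le m+n}(-1)^{|i|+|i_1|+\cdots+|i_{r-1}|}\,e^{[s_1]}_{i,i_1}e^{[s_2]}_{i_1,i_2}\cdots e^{[s_r]}_{i_{r-1},j}.$$
   Context: Let $m,n,\ell$ be non-negative integers and $\mathfrak{b}=(\mathfrak{b}_1,\dots,\mathfrak{b}_{m+n})$ a sequence with $m$ entries $\delta$ and $n$ entries $\epsilon$; $|i|=\bar0$ if $\mathfrak{b}_i=\delta$, $|i|=\bar1$ if $\mathfrak{b}_i=\epsilon$. Let $\pi$ be a rectangular array of boxes with $m+n$ rows (top to bottom) and $\ell$ columns (left to right), row $i$ of parity $|i|$; for a box $a$ write $\mathrm{row}(a)$, $\mathrm{col}(a)$, $|a|:=|\mathrm{row}(a)|$, and let $i\star c$ be the box in row $i$, column $c$. Let $V=\mathbb{C}^{M|N}$ ($M=m\ell$, $N=n\ell$) have homogeneous basis $\{v_a\}$ indexed by boxes, $v_a$ of parity $|a|$; $\mathfrak{g}=\mathfrak{gl}_{M|N}=\mathrm{End}(V)$ with matrix units $e_{a,b}$. Let $\mathfrak{p}=\mathrm{span}\{e_{a,b}:\mathrm{col}(a)\le\mathrm{col}(b)\}$ and $\mathfrak{h}=\mathrm{span}\{e_{a,b}:\mathrm{col}(a)=\mathrm{col}(b)\}\cong\mathfrak{gl}_{m|n}^{\oplus\ell}$,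 with basis $e^{[c]}_{i,j}:=e_{i\star c,\,j\star c}$. Let $\xi:U(\mathfrak{p})\to U(\mathfrak{h})$ be the algebra homomorphism induced by the projection $\mathfrak{p}\to\mathfrak{h}$ with kernel $\mathrm{span}\{e_{a,b}:\mathrm{col}(a)<\mathrm{col}(b)\}$. For $1\le c\le\ell$ put $\rho_c=-(\ell-c)(m-n)$, and let $\eta:U(\mathfrak{h})\to U(\mathfrak{h})$ be the algebra automorphism with $e^{[c]}_{i,j}\mapsto e^{[c]}_{i,j}-\delta_{ij}(-1)^{|i|}\rho_c$. Set $\mu=\eta\circ\xi$. Let $\tilde e_{a,b}=(-1)^{\mathrm{col}(b)-\mathrm{col}(a)}(e_{a,b}+\delta_{ab}(-1)^{|a|}\rho_{\mathrm{col}(a)})$, and for $1\le r\le\ell$ let $t^{(r)}_{ij;\mathfrak{b}}=\sum_{s=1}^r\sum(-1)^{|a_1|+\cdots+|a_s|}\tilde e_{a_1,b_1}\cdots\tilde e_{a_s,b_s}\in U(\mathfrak{p})$, the inner sum over boxes $a_1,\dots,a_s,b_1,\dots,b_s$ with $\sum_t(\mathrm{col}(b_t)-\mathrm{col}(a_t)+1)=r$; $\mathrm{col}(a_t)\le\mathrm{col}(b_t)$ for all $t$; $\mathrm{col}(b_t)<\mathrm{col}(a_{t+1})$ and $\mathrm{row}(b_t)=\mathrm{row}(a_{t+1})$ for $t<s$; $\mathrm{row}(a_1)=i$, $\mathrm{row}(b_s)=j$. *)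

(* Defs.v *)
From HB Require Import structures.
From mathcomp Require Import all_boot all_order all_algebra.
From mathcomp Require Export algC.
Set Implicit Arguments. Unset Strict Implicit. Unset Printing Implicit Defensive.
Import Order.TTheory GRing.Theory Num.Theory.
Local Open Scope ring_scope.

(* Conventions (0-based): rows are 'I_(m+n), columns are 'I_l.
   par i = true  iff  b_i = epsilon (odd), false iff b_i = delta (even).
   A box is a pair (row, column). *)
Definition box (m n l : nat) := ('I_(m + n) * 'I_l)%type.

(* rho_c = -(l - c)(m - n) for the 1-based column c; here c is 0-based,
   so the 1-based column is c.+1. *)
Definition rho (l m n : nat) (c : 'I_l) : int :=
  - ((l - c.+1)%:Z * (m%:Z - n%:Z)).

Definition etilde {A : pzRingType} (m n l : nat) (par : 'I_(m + n) -> bool)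
  (E : box m n l -> box m n l -> A) (a b : box m n l) : A :=
  (-1) ^+ (b.2 - a.2)%N *
    (E a b + (a == b)%:R * (-1) ^+ par a.1 * (@rho l m n a.2)%:~R).

(* admissible data (a_1,b_1,...,a_s,b_s) for t^{(r)}_{ij}, f k = (a_{k+1}, b_{k+1}) *)
Definition t_adm (m n l r s : nat) (i j : 'I_(m + n))
  (f : {ffun 'I_s -> box m n l * box m n l}) : bool :=
  [&& (\sum_(k < s) ((f k).2.2 - (f k).1.2 + 1))%N == r,
      [forall k : 'I_s, ((f k).1.2 <= (f k).2.2)%N],
      [forall k : 'I_s, forall k' : 'I_s, (k.+1 == k' :> nat) ==>
          ((((f k).2.2 < (f k').1.2)%N) && ((f k).2.1 == (f k').1.1))],
      [forall k : 'I_s, (k == 0 :> nat) ==> ((f k).1.1 == i)] &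
      [forall k : 'I_s, (k.+1 == s :> nat) ==> ((f k).2.1 == j)]].

(* t^{(r)}_{ij;b} in an algebra containing the generators E a b = e_{a,b} *)
Definition t_elem {A : pzRingType} (m n l : nat) (par : 'I_(m + n) -> bool)
  (E : box m n l -> box m n l -> A) (r : nat) (i j : 'I_(m + n)) : A :=
  \sum_(1 <= s < r.+1)
    \sum_(f : {ffun 'I_s -> box m n l * box m n l} | @t_adm m n l r s i j f)
      (-1) ^+ (\sum_(k < s) par (f k).1.1)%N *
      \prod_(k < s) etilde par E (f k).1 (f k).2.

(* the right-hand side, written with E c i j = e^{[c]}_{i,j};
   g encodes (i = i_0, i_1, ..., i_{r-1}, i_r = j) *)
Definition rhs_elem {A : pzRingType} (m n l : nat) (par : 'I_(m + n) -> bool)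
  (E : 'I_l -> 'I_(m + n) -> 'I_(m + n) -> A) (r : nat) (i j : 'I_(m + n)) : A :=
  \sum_(s : {ffun 'I_r -> 'I_l} |
          [forall k : 'I_r, forall k' : 'I_r, (k < k')%N ==> (s k < s k')%N])
    \sum_(g : {ffun 'I_r.+1 -> 'I_(m + n)} | (g ord0 == i) && (g ord_max == j))
      (-1) ^+ (\sum_(k < r) par (g (widen_ord (leqnSn r) k)))%N *
      \prod_(k < r) E (s k) (g (widen_ord (leqnSn r) k)) (g (lift ord0 k)).

(* Main.v *)
Require Import Defs.
From HB Require Import structures.
From mathcomp Require Import all_boot all_order all_algebra algC.
From mathcomp Require Import zify.
Import Order.TTheory GRing.Theory Num.Theory.
Local Open Scope ring_scope.

Lemma incr_iff (r : nat) (s : 'I_r.+1 -> nat) :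
  [forall k : 'I_r.+1, forall k' : 'I_r.+1, (k.+1 == k' :> nat) ==> (s k < s k')%N]
  = [forall k : 'I_r.+1, forall k' : 'I_r.+1, (k < k')%N ==> (s k < s k')%N].
Proof.
apply/idP/idP => /forallP H; apply/forallP => k; apply/forallP => k';
  apply/implyP => Hk.
- pose S x := s (inord x).
  have HS : forall x, (x < r)%N -> (S x < S x.+1)%N.
    move=> x Hx; have := forallP (H (inord x)) (inord x.+1).
    rewrite /S !inordK //; last by lia.
    by move/implyP; apply; rewrite eqxx.
  have Hd : forall d x, (x + d.+1 <= r)%N -> (S x < S (x + d.+1))%N.
    elim=> [|d IH] x Hx; first by rewrite addn1; apply: HS; lia.
    apply: (ltn_trans (IH x _)); first by lia.
    by rewrite [X in (_ < S X)%N]addnS; apply: HS; lia.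
  have := Hd (k' - k - 1)%N k ltac:(have := ltn_ord k'; lia).
  have -> : (k + (k' - k - 1).+1 = k')%N by lia.
  by rewrite /S !inord_val.
- have := forallP (H k) k'; move/implyP; apply.
  by move/eqP: Hk => <-.
Qed.

Lemma prod_zero (R : pzSemiRingType) (I : finType) (F : I -> R) k :
  F k = 0 -> \prod_i F i = 0.
Proof.
move=> H; rewrite unlock.
have : k \in index_enum I by rewrite mem_index_enum.
elim: (index_enum I) => //= x s IH; rewrite inE => /orP [/eqP <-|/IH ->].
  by rewrite H mul0r.
by rewrite mulr0.
Qed.

Theorem lemma4p3 (m n l : nat) (par : 'I_(m + n) -> bool)
  (Hpar : #|[set i | par i]| = n)
  (Up Uh : algType algC)
  (Ep : box m n l -> box m n l -> Up)
  (Eh : 'I_l -> 'I_(m + n) -> 'I_(m + n) -> Uh)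
  (HEp : forall a b c d : box m n l, (a.2 <= b.2)%N -> (c.2 <= d.2)%N ->
     Ep a b * Ep c d
       - (-1) ^+ ((par a.1 + par b.1) * (par c.1 + par d.1))%N * (Ep c d * Ep a b)
     = (b == c)%:R * Ep a d
       - (-1) ^+ ((par a.1 + par b.1) * (par c.1 + par d.1))%N * (a == d)%:R * Ep c b)
  (HEh : forall (c c' : 'I_l) (i j k h : 'I_(m + n)),
     Eh c i j * Eh c' k h
       - (-1) ^+ ((par i + par j) * (par k + par h))%N * (Eh c' k h * Eh c i j)
     = (c == c')%:R * ((j == k)%:R * Eh c i h
       - (-1) ^+ ((par i + par j) * (par k + par h))%N * (i == h)%:R * Eh c k j))
  (xi : {rmorphism Up -> Uh})
  (Hxi : forall a b : box m n l, (a.2 <= b.2)%N ->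
     xi (Ep a b) = if a.2 == b.2 then Eh a.2 a.1 b.1 else 0)
  (eta : {rmorphism Uh -> Uh})
  (Heta : forall (c : 'I_l) (i j : 'I_(m + n)),
     eta (Eh c i j) = Eh c i j - (i == j)%:R * (-1) ^+ par i * (@rho l m n c)%:~R)
  (i j : 'I_(m + n)) (r : nat) (Hr1 : (1 <= r)%N) (Hrl : (r <= l)%N) :
  eta (xi (t_elem par Ep r i j)) = rhs_elem par Eh r i j.
Proof.
have HMx : forall x y : Up, xi (x * y) = xi x * xi y by move=> x y; exact: rmorphM.
have HDx : forall x y : Up, xi (x + y) = xi x + xi y by move=> x y; exact: raddfD.
have HMe : forall x y : Uh, eta (x * y) = eta x * eta y by move=> x y; exact: rmorphM.
have HDe : forall x y : Uh, eta (x + y) = eta x + eta y by move=> x y; exact: raddfD.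
have HA : forall a b : box m n l, (a.2 <= b.2)%N ->
    eta (xi (etilde par Ep a b)) = if a.2 == b.2 then Eh a.2 a.1 b.1 else 0.
  move=> [a1 a2] [b1 b2] /= Hab.
  rewrite /etilde /= !HMx !HDx !HMx !HMe !HDe !HMe.
  rewrite !rmorph_sign !rmorph_nat !rmorph_int Hxi //=.
  case: eqP => Hc.
  - subst b2; rewrite subnn expr0 mul1r xpair_eqE eqxx andbT.
    by rewrite Heta subrK.
  - have -> : ((a1, a2) == (b1, b2)) = false.
      by apply/negbTE; rewrite xpair_eqE negb_and; apply/orP; right; apply/eqP.
    by rewrite !mul0r rmorph0 add0r mulr0.
have HS : forall k, eta (xi ((-1) ^+ k)) = (-1) ^+ k :> Uh.
  by move=> k; rewrite !rmorph_sign.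
rewrite /t_elem !rmorph_sum.
case: r Hr1 Hrl => // r' _ Hrl.
rewrite big_nat_recr //= big_nat_cond big1 ?add0r; last first.
  move=> s /andP[/andP[_ Hs] _]; rewrite !rmorph_sum; apply: big1 => f Hf.
  move/and5P: Hf => [Hsum Hle _ _ _].
  rewrite HMx HMe HS !rmorph_prod.
  case: (pickP [pred k : 'I_s | ((f k).1.2 < (f k).2.2)%N]) => [k /= Hk | H0].
    rewrite (@prod_zero _ _ _ k) ?mulr0 //.
    rewrite HA ?(forallP Hle k) //; case: eqP => // E; by move: Hk; rewrite E ltnn.
  exfalso.
  have : (\sum_(k < s) ((f k).2.2 - (f k).1.2 + 1))%N = s.
    rewrite (eq_bigr (fun=> 1%N)) ?sum1_card ?card_ord // => k _.
    have := H0 k; rewrite /= => /negbT; rewrite -leqNgt -subn_eq0 => /eqP ->.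
    by [].
  move/eqP: Hsum => ->; lia.
rewrite !rmorph_sum /rhs_elem pair_big_dep.
pose h := fun p : ({ffun 'I_r'.+1 -> 'I_l} * {ffun 'I_r'.+2 -> 'I_(m+n)}) =>
  [ffun k : 'I_r'.+1 => ((p.2 (widen_ord (leqnSn _) k), p.1 k),
                           (p.2 (lift ord0 k), p.1 k))]
  : {ffun 'I_r'.+1 -> box m n l * box m n l}.
pose h' := fun f : {ffun 'I_r'.+1 -> box m n l * box m n l} =>
  ([ffun k => (f k).1.2],
   [ffun k : 'I_r'.+2 => if (k < r'.+1)%N then (f (inord k)).1.1
                         else (f ord_max).2.1]).
rewrite (reindex h); last first.
  exists h'.
  - move=> [s g] _; rewrite /h /h'; congr pair; apply/ffunP => k; rewrite !ffunE //=.
    case: ifP => Hk.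
    + congr (g _); apply: val_inj; rewrite /= inordK //.
    + congr (g _); apply: val_inj => /=.
      have := ltn_ord k; rewrite /bump /=; lia.
  - move=> f; rewrite inE => /and5P [Hsum Hle Hch _ _].
    have Hs0 : (\sum_(k < r'.+1) ((f k).2.2 - (f k).1.2))%N = 0%N.
      move: Hsum; rewrite big_split /= sum1_card card_ord => /eqP/(congr1 (subn^~ r'.+1)).
      by rewrite addnK subnn.
    have Hcol : forall k, (f k).1.2 = (f k).2.2.
      move=> k; apply: val_inj; apply/eqP; rewrite /= eqn_leq (forallP Hle k) /=.
      have : ((f k).2.2 - (f k).1.2 <= 0)%N by rewrite -Hs0 (bigD1 k) //= leq_addr.
      by rewrite leqn0 subn_eq0.
    apply/ffunP => k; rewrite /h /h' !ffunE /=.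
    rewrite ltn_ord inord_val.
    have -> : (if (bump 0 k < r'.+1)%N then (f (inord (bump 0 k))).1.1
               else (f ord_max).2.1) = (f k).2.1.
      case: ifP => Hk.
      + have := forallP (forallP Hch k) (inord (bump 0 k)).
        rewrite inordK // /bump /= eqxx /= => /andP [_ /eqP] ->.
        by [].
      + have -> : k = ord_max.
          by apply: val_inj => /=; move: Hk; rewrite /bump /=; have := ltn_ord k; lia.
        by [].
    by case: (f k) (Hcol k) => [[? ?] [? ?]] /= ->.
apply: eq_big => [[s g]|[s g] _].
- rewrite /t_adm /h /=.
  have -> : (\sum_(k < r'.+1) (([ffun k0 => ((g (widen_ord (leqnSn r'.+1) k0), s k0),
              (g (lift ord0 k0), s k0))] k).2.2 - ([ffun k0 => ((g (widen_ord (leqnSn r'.+1) k0), s k0),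
              (g (lift ord0 k0), s k0))] k).1.2 + 1) == r'.+1)%N.
    rewrite (eq_bigr (fun=> 1%N)) ?sum1_card ?card_ord // => k _.
    by rewrite ffunE /= subnn.
  have -> : [forall k : 'I_r'.+1, (([ffun k0 => ((g (widen_ord (leqnSn r'.+1) k0), s k0),
              (g (lift ord0 k0), s k0))] k).1.2 <= ([ffun k0 => ((g (widen_ord (leqnSn r'.+1) k0), s k0),
              (g (lift ord0 k0), s k0))] k).2.2)%N].
    by apply/forallP => k; rewrite ffunE.
  rewrite /=; congr [&& _, _ & _].
  + rewrite -incr_iff; apply: eq_forallb => k; apply: eq_forallb => k'.
    rewrite !ffunE /=; case: eqP => Hk //=.
    have -> : lift ord0 k = widen_ord (leqnSn r'.+1) k'.
      by apply: val_inj; rewrite /= /bump leq0n add1n Hk.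
    by rewrite eqxx andbT.
  + apply/idP/idP.
    * move/forallP => /(_ ord0); rewrite ffunE /=.
      have -> : widen_ord (leqnSn r'.+1) ord0 = ord0 by apply: val_inj.
      by [].
    * move=> H; apply/forallP => k; apply/implyP => /eqP Hk; rewrite ffunE /=.
      have -> : widen_ord (leqnSn r'.+1) k = ord0 by apply: val_inj; rewrite /= Hk.
      exact: H.
  + apply/idP/idP.
    * move/forallP => /(_ ord_max); rewrite ffunE /=.
      have -> : lift ord0 (@ord_max r') = ord_max.
        by apply: val_inj; rewrite /= /bump leq0n add1n.
      by move/implyP; apply.
    * move=> H; apply/forallP => k; apply/implyP => /eqP Hk; rewrite ffunE /=.
      have -> : lift ord0 k = ord_max.
        by apply: val_inj; rewrite /= /bump leq0n add1n Hk.
      exact: H.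
- rewrite HMx HMe HS !rmorph_prod /=; congr (_ * _).
  + congr ((-1) ^+ _); apply: eq_bigr => k _; by rewrite ffunE.
  + apply: eq_bigr => k _; by rewrite ffunE HA /= ?eqxx.
Qed.
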